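(* Let $\rho\colon\mathrm{Isom}(\mathbf H^1_{\mathbb C})_o\to\mathrm{Isom}(\mathbf H^\infty_{\mathbb C})_o$ be the complexification of an irreducible representation $\mathrm{Isom}(\mathbf H^1_{\mathbb C})_o\to\mathrm{Isom}(\mathbf H^\infty_{\mathbb R})_o$. Then $\mathrm{Im}\,K(b)=0$ for every $b\in\mathbb R$.
   Context: $\mathbf H^\infty_{\mathbb R}$ is defined from a real separable Hilbert space $\mathcal H_{\mathbb R}$ with a strongly non-degenerate symmetric bilinear form of signature $(1,\infty)$, and its isometries are induced by $O(1,\infty)$; a representation into $\mathrm{Isom}(\mathbf H^\infty_{\mathbb R})$ is a homomorphism into $O(1,\infty)$ acting on $\mathcal H_{\mathbb R}$; its complexification is the induced action on $\mathcal H=\mathcal H_{\mathbb R}\otimes\mathbb C$ with the sesquilinear extension $B$ of the form, giving a representation into $U(B)$ and hence into $\mathrm{Isom}(\mathbf H^\infty_{\mathbb C})_o$ where $\mathbf H^\infty_{\mathbb C}=\{[v]:B(v,v)>0\}$ (and this complexification is non-elementary). Representations are orbitally continuous homomorphisms; irreducible = no fixed point in the space or its boundary, no invariant pair of boundary points, and no proper invariant hyperbolic subspace. $\mathbf H^1_{\mathbb C}$: $\mathbb C^2$ with $B(z,w)=z_1\bar w_1-z_2\bar w_2$, $\xi_{1,2}=(e_1\pm e_2)/\sqrt2$; $g(\lambda,b)\in SU(1,1)$ has matrix $\begin{pmatrix}\lambda&ib\\0&\lambda^{-1}\end{pmatrix}$ in basis $(\xi_1,\xi_2)$. For non-elementary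 $\rho$ into $\mathrm{Isom}(\mathbf H^\infty_{\mathbb C})_o$: $\eta_1$ = unique common fixed boundary point of the $\rho(g(\lambda,b))$, $\eta_2$ = other endpoint of the common axis of the $\rho(g(\lambda,0))$, $\lambda\neq1$; isotropic representatives with $B(\eta_1,\eta_2)=1$; $E=\eta_1^\perp\cap\eta_2^\perp$; the lift $T_b\in U(B)$ of $\rho(g(1,b))$ with $T_b\eta_1=\eta_1$ satisfies $T_b\eta_2=K(b)\eta_1+\eta_2+c(b)$, $K(b)\in\mathbb C$, $c(b)\in E$ (the paper writes $\Delta(b)=\mathrm{Im}K(b)$). *)

(* Defs.v *)
From mathcomp Require Import all_boot all_algebra.
From mathcomp Require Import all_classical all_reals all_analysis.
From mathcomp Require Import complex.
Set Implicit Arguments. Unset Strict Implicit. Unset Printing Implicit Defensive.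
Import GRing.Theory Num.Theory numFieldNormedType.Exports.
Local Open Scope ring_scope.
Local Open Scope complex_scope.

Section HypDefs.
Variable R : realType.

(* Model: H_R = R (+) l^2(N), realised as square-summable sequences        *)
(* v : nat -> R; index 0 is the positive direction, indices >= 1 span the  *)
Definition vec := nat -> R.

Definition l2 (v : vec) : Prop := cvgn (series (fun k => v k ^+ 2)).

Definition normsq (v : vec) : R := limn (series (fun k => v k ^+ 2)).

Definition Bform (u v : vec) : R :=
  u 0%N * v 0%N - limn (series (fun k => u k.+1 * v k.+1)).

Definition vlin (a : R) (u v : vec) : vec := fun k => a * u k + v k.
Definition vsub (u v : vec) : vec := fun k => u k - v k.
Definition vzero : vec := fun _ => 0.

(* T : H_R -> H_R is an element of O(1,oo) preserving the upper sheet of the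
   hyperboloid, i.e. an isometry of H^oo_R (bounded, linear, bijective on H_R,
   preserving B, sending the positive cone component {x_0 > 0} to itself). *)
Definition isomR (T : vec -> vec) : Prop :=
  [/\ (forall v, l2 v -> l2 (T v)),
      (forall a u v, l2 u -> l2 v -> T (vlin a u v) = vlin a (T u) (T v)),
      (exists C : R, forall v, l2 v -> normsq (T v) <= C * normsq v),
      ((forall u v, l2 u -> l2 v -> T u = T v -> u = v) /\
       (forall w, l2 w -> exists v, l2 v /\ T v = w)) &
      ((forall u v, l2 u -> l2 v -> Bform (T u) (T v) = Bform u v) /\
       (forall v, l2 v -> 0 < Bform v v -> 0 < v 0%N -> 0 < T v 0%N))].

Definition rproj_eq (u v : vec) : Prop := exists a : R, a != 0 /\ v = (fun k => a * u k).

(* points of H^oo_R and of its boundary (as representatives) *)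
Definition rpoint (x : vec) : Prop := l2 x /\ 0 < Bform x x.
Definition rboundary (xi : vec) : Prop := [/\ l2 xi, xi <> vzero & Bform xi xi = 0].

(* closed linear subspaces W of H_R meeting the positive cone: they define the
   (non-empty) hyperbolic subspaces  P(W) /\ H^oo_R. *)
Definition hyp_subspace (W : vec -> Prop) : Prop :=
  [/\ (forall w, W w -> l2 w), W vzero,
      (forall a u v, W u -> W v -> W (vlin a u v)),
      (forall v, l2 v -> (forall e : R, 0 < e -> exists w, W w /\ normsq (vsub v w) < e) -> W v) &
      (exists x, W x /\ 0 < Bform x x)].

(* The group Isom(H^1_C)_o = PU(1,1) = U(1,1)/U(1), with U(1,1) the 2x2    *)
(* complex matrices preserving B(z,w) = z1 w1^* - z2 w2^*.                 *)
Definition Jmx : 'M[R[i]]_2 := diag_mx (\row_(i < 2) (if i == ord0 then 1 else -1)).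

Definition U11 (g : 'M[R[i]]_2) : Prop := (map_mx Num.conj g)^T *m Jmx *m g = Jmx.

(* Q has columns e1+e2, e1-e2 = sqrt 2 xi_1, sqrt 2 xi_2; since Q^2 = 2,
   the matrix with matrix M in the basis (xi_1, xi_2) is Q M Q / 2. *)
Definition Qmx : 'M[R[i]]_2 :=
  \matrix_(i < 2, j < 2) (if (i == 1) && (j == 1) then -1 else 1).

Definition Mxi (lam b : R) : 'M[R[i]]_2 :=
  \matrix_(i < 2, j < 2)
    (if i == ord0 then (if j == ord0 then lam%:C else 'i * b%:C)
     else (if j == ord0 then 0 else (lam^-1)%:C)).

Definition gmat (lam b : R) : 'M[R[i]]_2 := 2^-1 *: (Qmx *m Mxi lam b *m Qmx).

(* rho : U(1,1) -> functions on H_R, descending to PU(1,1), is a representation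
   (orbitally continuous homomorphism) into Isom(H^oo_R). *)
Definition representation (rho : 'M[R[i]]_2 -> vec -> vec) : Prop :=
  [/\ (forall g, U11 g -> isomR (rho g)),
      (forall g h, U11 g -> U11 h -> forall v, l2 v -> rho (g *m h) v = rho g (rho h v)),
      (forall g (mu : R[i]), U11 g -> `|mu| = 1 -> forall v, l2 v -> rho (mu *: g) v = rho g v) &
      (forall g x, U11 g -> l2 x -> Bform x x = 1 -> 0 < x 0%N ->
         forall e : R, 0 < e -> exists d : R, 0 < d /\
           forall h, U11 h -> (forall i j, `|h i j - g i j| < d%:C) ->
             normsq (vsub (rho h x) (rho g x)) < e)].

Definition irreducible (rho : 'M[R[i]]_2 -> vec -> vec) : Prop :=
  [/\
      ~ (exists x, rpoint x /\ forall g, U11 g -> rproj_eq x (rho g x)),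
      ~ (exists xi, rboundary xi /\ forall g, U11 g -> rproj_eq xi (rho g xi)),
      ~ (exists xi xi', [/\ rboundary xi, rboundary xi', ~ rproj_eq xi xi' &
           forall g, U11 g ->
             (rproj_eq xi (rho g xi) /\ rproj_eq xi' (rho g xi')) \/
             (rproj_eq xi' (rho g xi) /\ rproj_eq xi (rho g xi'))]) &
      ~ (exists W, [/\ hyp_subspace W, (exists v, l2 v /\ ~ W v) &
           forall g w, U11 g -> W w -> W (rho g w)])].

(* Complexification H = H_R (x) C, vectors z = z.1 + i z.2.                *)
Definition cvec := (vec * vec)%type.

Definition cl2 (z : cvec) : Prop := l2 z.1 /\ l2 z.2.
Definition czero : cvec := (vzero, vzero).

(* sesquilinear extension: B(x+iy, u+iv) = B(x,u)+B(y,v) + i (B(y,u)-B(x,v)) *)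
Definition cB (z w : cvec) : R[i] :=
  (Bform z.1 w.1 + Bform z.2 w.2) +i* (Bform z.2 w.1 - Bform z.1 w.2).

Definition csmul (mu : R[i]) (z : cvec) : cvec :=
  (fun k => complex.Re mu * z.1 k - complex.Im mu * z.2 k, fun k => complex.Re mu * z.2 k + complex.Im mu * z.1 k).

Definition cvadd (z w : cvec) : cvec := (fun k => z.1 k + w.1 k, fun k => z.2 k + w.2 k).

Definition complexify (T : vec -> vec) : cvec -> cvec := fun z => (T z.1, T z.2).

Definition cproj_eq (z w : cvec) : Prop := exists mu : R[i], mu != 0 /\ w = csmul mu z.

(* boundary points of H^oo_C = {[v] : B(v,v) > 0}: isotropic lines *)
Definition cboundary (z : cvec) : Prop := [/\ cl2 z, z <> czero & cB z z = 0].

Definition cfixes (T : cvec -> cvec) (z : cvec) : Prop := exists mu : R[i], T z = csmul mu z.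

(* The geodesic of H^oo_C joining distinct boundary points [xi], [xi'] is
   { [t xi + xi'] : t in C, t B(xi,xi') real > 0 }. *)
Definition geod_pt (xi xi' : cvec) (t : R[i]) : cvec := cvadd (csmul t xi) xi'.
Definition on_geod_param (xi xi' : cvec) (t : R[i]) : Prop := 0 < t * cB xi xi'.

(* [xi], [xi'] are the endpoints of the axis of (the isometry induced by) T:
   T preserves the geodesic joining them and acts on it by a nontrivial
   translation (no point of it is fixed). *)
Definition axis_endpoints (T : cvec -> cvec) (xi xi' : cvec) : Prop :=
  [/\ cboundary xi, cboundary xi', ~ cproj_eq xi xi',
      (forall t, on_geod_param xi xi' t ->
         exists t', on_geod_param xi xi' t' /\ cproj_eq (geod_pt xi xi' t') (T (geod_pt xi xi' t))) &
      (forall t, on_geod_param xi xi' t ->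
         ~ cproj_eq (geod_pt xi xi' t) (T (geod_pt xi xi' t)))].

End HypDefs.

(* Main.v *)
Require Import Defs.
From mathcomp Require Import all_boot all_algebra.
From mathcomp Require Import all_classical all_reals all_analysis.
From mathcomp Require Import complex.
From mathcomp Require Import ring lra.
Import order.Order.TTheory GRing.Theory Num.Theory numFieldNormedType.Exports.
Local Open Scope ring_scope.
Local Open Scope complex_scope.
Lemma sum2 (V : zmodType) (F : 'I_2 -> V) : \sum_(i < 2) F i = F ord0 + F ord_max.
Proof. rewrite big_ord_recr /=. rewrite big_ord_recr big_ord0 /= add0r. congr (F _ + F _). exact: val_inj. Qed.
Lemma ord2P (i : 'I_2) : i = ord0 \/ i = ord_max.
Proof. case: i => [[|[|//]] Hi]; [left|right]; exact: val_inj. Qed.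
Lemma o1 : (ord_max == 1 :> 'I_2) = true. Proof. by []. Qed.
Lemma o2 : (ord0 == 1 :> 'I_2) = false. Proof. by []. Qed.
Lemma o3 : (ord_max == ord0 :> 'I_2) = false. Proof. by []. Qed.

Lemma cE (R : realType) (x y : R) : x +i* y = x%:C + 'i * y%:C.
Proof. by apply/eqP; rewrite eq_complex /= !(mul0r, mul1r, subr0, addr0, add0r) !eqxx. Qed.
Lemma two_neq0 (R : realType) : (2 : R[i]) != 0.
Proof. by rewrite pnatr_eq0. Qed.
Lemma gmatE (R : realType) (lam b : R) : lam != 0 -> gmat lam b =
  \matrix_(i < 2, j < 2) (if i == ord0 then (if j == ord0 then ((lam + lam^-1)/2) +i* (b/2) else ((lam - lam^-1)/2) +i* (-(b/2)))
                           else (if j == ord0 then ((lam - lam^-1)/2) +i* (b/2) else ((lam + lam^-1)/2) +i* (-(b/2)))).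
Proof.
move=> hl.
rewrite /gmat /Qmx /Mxi.
apply/matrixP => i j.
rewrite !mxE !sum2 !mxE !sum2 !mxE.
have h2 := two_neq0 R.
have hl' : lam%:C != 0 :> R[i] by rewrite fmorph_eq0.
case: (ord2P i) => ->; case: (ord2P j) => ->; rewrite ?eqxx ?o1 ?o2 ?o3 /=;
rewrite cE !(rmorphD, rmorphM, rmorphN, fmorphV, rmorph_nat) /=; by field.
Qed.
Lemma conjE (R : realType) (x y : R) : Num.conj (x +i* y) = x +i* (- y).
Proof. reflexivity. Qed.
Lemma U11_explicit (R : realType) (A D c : R) : A ^+ 2 - D ^+ 2 = 1 ->
  U11 (\matrix_(i < 2, j < 2) (if i == ord0 then (if j == ord0 then A +i* c else D +i* (-c))
                           else (if j == ord0 then D +i* c else A +i* (-c)))).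
Proof.
move=> hAD.
rewrite /U11 /Jmx.
apply/matrixP => i j.
rewrite !mxE !sum2 !mxE !sum2 !mxE.
case: (ord2P i) => ->; case: (ord2P j) => ->; rewrite ?eqxx ?o1 ?o2 ?o3 /= !conjE.
all: apply/eqP; rewrite eq_complex /=; apply/andP; split; apply/eqP.
all: rewrite ?oppr0; try ring.
all: try (rewrite -[X in _ = X]hAD; ring).
all: try (rewrite -[X in _ = - X]hAD; ring).
Qed.
Lemma U11_gmat (R : realType) (lam b : R) : lam != 0 -> U11 (gmat lam b).
Proof. move=> hl; rewrite gmatE //; apply: U11_explicit. by field. Qed.
Lemma cplx_eq0 (R : realType) (a b : R) : a +i* b = 0 -> a = 0 /\ b = 0.
Proof. by case. Qed.
Lemma cplx_eq1 (R : realType) (a b : R) : a +i* b = 1 -> a = 1 /\ b = 0.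
Proof. by case. Qed.
Lemma Re1 (R : realType) : complex.Re (1 : R[i]) = 1. Proof. by []. Qed.
Lemma Im1 (R : realType) : complex.Im (1 : R[i]) = 0. Proof. by []. Qed.
Section Infra.
Variable R : realType.
Implicit Types (u v w : vec R).
Lemma scaleRE (a x : R) : a *: x = a * x. Proof. by []. Qed.
Lemma series_shift1 (u : R^nat) : cvgn (series u) -> cvgn (series (fun k => u k.+1)).
Proof.
move=> hu.
have E : series (fun k => u k.+1) = (fun n => series u n.+1 - u 0%N).
  apply/funext => n; rewrite /series /= big_nat_recl //=.
  by rewrite addrC addKr.
rewrite E.
apply: is_cvgB; last exact: is_cvg_cst.
apply/cvg_ex; exists (limn (series u)).
have := cvg_shiftS (series u) (nbhs (limn (series u))).
move=> ->. exact: hu.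
Qed.

Lemma abs_prod_le (a b : R) : `|a * b| <= a ^+ 2 + b ^+ 2.
Proof.
rewrite normrM.
have h1 := real_normK (num_real a); have h2 := real_normK (num_real b).
have h3 := normr_ge0 a; have h4 := normr_ge0 b.
rewrite -h1 -h2. nra.
Qed.

Lemma prod_cvg u v : l2 u -> l2 v -> cvgn (series (fun k => u k.+1 * v k.+1)).
Proof.
move=> hu hv.
apply: normed_cvg.
apply: (@series_le_cvg _ _ (fun k => u k.+1 ^+ 2 + v k.+1 ^+ 2)).
- by move=> n; rewrite normr_ge0.
- by move=> n; rewrite addr_ge0 // sqr_ge0.
- by move=> n; apply: abs_prod_le.
- exact (is_cvg_seriesD (@series_shift1 (fun k => u k ^+ 2) hu) (@series_shift1 (fun k => v k ^+ 2) hv)).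
Qed.

Arguments prod_cvg {u v}.
Lemma l2_lc (a b : R) u v : l2 u -> l2 v -> l2 (fun k => a * u k + b * v k).
Proof.
move=> hu hv; rewrite /l2.
apply: (@series_le_cvg _ _ ((2 * a ^+ 2) *: (fun k => u k ^+ 2) + (2 * b ^+ 2) *: (fun k => v k ^+ 2))).
- by move=> n; rewrite sqr_ge0.
- move=> n; rewrite !fctE !scaleRE. have := sqr_ge0 a. have := sqr_ge0 b. have := sqr_ge0 (u n). have := sqr_ge0 (v n). nra.
- move=> n; rewrite !fctE !scaleRE. have := sqr_ge0 (a * u n - b * v n). nra.
- apply: is_cvg_seriesD; exact: is_cvg_seriesZ.
Qed.
Arguments l2_lc a b {u v}.

Lemma Bform_sym u v : Bform u v = Bform v u.
Proof.
rewrite /Bform mulrC; congr (_ - limn (series _)).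
by apply/funext => k; rewrite mulrC.
Qed.

Lemma Bform_lc (a b : R) u v w : l2 u -> l2 v -> l2 w ->
  Bform (fun k => a * u k + b * v k) w = a * Bform u w + b * Bform v w.
Proof.
move=> hu hv hw; rewrite /Bform.
have -> : (fun k => (a * u k.+1 + b * v k.+1) * w k.+1) =
   a *: (fun k => u k.+1 * w k.+1) + b *: (fun k => v k.+1 * w k.+1).
  by apply/funext => k; rewrite !fctE !scaleRE mulrDl !mulrA.
rewrite lim_seriesD; last first.
- exact (is_cvg_seriesZ (prod_cvg hv hw)).
- exact (is_cvg_seriesZ (prod_cvg hu hw)).
rewrite !lim_seriesZ ?(prod_cvg hv hw) ?(prod_cvg hu hw) //.
rewrite -[a *: limn _]/(a * limn _) -[b *: limn _]/(b * limn _).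
  ring.
all: exact: prod_cvg.
Qed.
Arguments Bform_lc a b {u v w}.

Lemma Bform_lcr (a b : R) u v w : l2 u -> l2 v -> l2 w ->
  Bform w (fun k => a * u k + b * v k) = a * Bform w u + b * Bform w v.
Proof.
move=> hu hv hw; rewrite Bform_sym Bform_lc // (Bform_sym u) (Bform_sym v) //.
Qed.

Lemma l2_vzero : l2 (@vzero R).
Proof.
rewrite /l2 /vzero.
have -> : (fun k : nat => (0:R) ^+ 2) = (fun _ => 0) by apply/funext => k; rewrite expr0n.
have -> : series (fun _ : nat => (0:R)) = (fun _ => 0).
  by apply/funext => n; rewrite /series /= big1.
exact: is_cvg_cst.
Qed.

Lemma Bform_iso0 w : l2 w -> w 0%N = 0 -> Bform w w = 0 -> forall k, w k = 0.
Proof.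
move=> hw h0 hB [|k]; first exact: h0.
move: hB; rewrite /Bform h0 mul0r sub0r => /eqP; rewrite oppr_eq0 => /eqP hL.
set f := (fun k => w k.+1 * w k.+1) in hL.
have hc : cvgn (series f) := prod_cvg hw hw.
have fge0 : forall n, 0 <= f n by move=> n; rewrite /f -expr2 sqr_ge0.
have hnd : {homo series f : n m / (n <= m)%N >-> n <= m}.
  apply: homo_leq => [x|y x z|n]; [exact: lexx|exact: le_trans|].
  by rewrite seriesSr lerDl.
have := nondecreasing_cvgn_le hnd hc k.+1.
rewrite hL seriesSr => hle.
have hs : 0 <= series f k by rewrite /series /=; apply: sumr_ge0 => i _.
have hfk : f k = 0 by apply/eqP; rewrite eq_le fge0 andbT; apply: le_trans hle; rewrite lerDr.
move: hfk; rewrite /f => /eqP; rewrite mulf_eq0 orbb => /eqP //.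
Qed.
Arguments Bform_iso0 {w}.

Lemma l2_scale (a : R) u : l2 u -> l2 (fun k => a * u k).
Proof.
move=> hu; have := l2_lc a 0 hu hu.
by have -> : (fun k => a * u k + 0 * u k) = (fun k => a * u k) by apply/funext => k; rewrite mul0r addr0.
Qed.
Arguments l2_scale a {u}.

Lemma l2_lc3 (a b c : R) u v w : l2 u -> l2 v -> l2 w ->
  l2 (fun k => a * u k + b * v k + c * w k).
Proof.
move=> hu hv hw; pose U := fun k => a * u k + b * v k.
have -> : (fun k => a * u k + b * v k + c * w k) = (fun k => 1 * U k + c * w k).
  by apply/funext => k; rewrite /U mul1r.
by apply: l2_lc => //; apply: l2_lc.
Qed.

Lemma l2_lc4 (a b c d : R) u v w z : l2 u -> l2 v -> l2 w -> l2 z ->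
  l2 (fun k => a * u k + b * v k + c * w k + d * z k).
Proof.
move=> hu hv hw hz; pose U := fun k => a * u k + b * v k + c * w k.
have -> : (fun k => a * u k + b * v k + c * w k + d * z k) = (fun k => 1 * U k + d * z k).
  by apply/funext => k; rewrite /U mul1r.
by apply: l2_lc => //; apply: l2_lc3.
Qed.

Lemma Bform_scale (a : R) u y : l2 u -> l2 y -> Bform (fun k => a * u k) y = a * Bform u y.
Proof.
move=> hu hy; have := Bform_lc a 0 hu hu hy.
have -> : (fun k => a * u k + 0 * u k) = (fun k => a * u k) by apply/funext => k; rewrite mul0r addr0.
by move=> ->; rewrite mul0r addr0.
Qed.

Lemma Bform_scaler (a : R) u y : l2 u -> l2 y -> Bform y (fun k => a * u k) = a * Bform y u.
Proof. by move=> hu hy; rewrite Bform_sym Bform_scale // Bform_sym. Qed.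

Lemma Bform_lc3 (a b c : R) u v w y : l2 u -> l2 v -> l2 w -> l2 y ->
  Bform (fun k => a * u k + b * v k + c * w k) y = a * Bform u y + b * Bform v y + c * Bform w y.
Proof.
move=> hu hv hw hy; pose U := fun k => a * u k + b * v k.
have -> : (fun k => a * u k + b * v k + c * w k) = (fun k => 1 * U k + c * w k).
  by apply/funext => k; rewrite /U mul1r.
rewrite Bform_lc //; last by apply: l2_lc.
by rewrite /U Bform_lc // mul1r.
Qed.

Lemma Bform_lc4 (a b c d : R) u v w z y : l2 u -> l2 v -> l2 w -> l2 z -> l2 y ->
  Bform (fun k => a * u k + b * v k + c * w k + d * z k) y =
  a * Bform u y + b * Bform v y + c * Bform w y + d * Bform z y.
Proof.
move=> hu hv hw hz hy; pose U := fun k => a * u k + b * v k + c * w k.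
have -> : (fun k => a * u k + b * v k + c * w k + d * z k) = (fun k => 1 * U k + d * z k).
  by apply/funext => k; rewrite /U mul1r.
rewrite Bform_lc //; last by apply: l2_lc3.
by rewrite /U Bform_lc3 // mul1r.
Qed.

Lemma Bform_lcr3 (a b c : R) u v w y : l2 u -> l2 v -> l2 w -> l2 y ->
  Bform y (fun k => a * u k + b * v k + c * w k) = a * Bform y u + b * Bform y v + c * Bform y w.
Proof.
by move=> hu hv hw hy; rewrite Bform_sym Bform_lc3 // (Bform_sym u) (Bform_sym v) (Bform_sym w).
Qed.

Lemma iso_pair u v : l2 u -> l2 v -> Bform u u = 0 -> Bform v v = 0 -> Bform u v = 0 ->
  exists f (al be : R), [/\ l2 f, u = (fun k => al * f k) & v = (fun k => be * f k)].
Proof.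
move=> hu hv huu hvv huv.
case: (eqVneq (u 0%N) 0) => hu0.
  have uz := Bform_iso0 hu hu0 huu.
  exists v, 0, 1; split => //; apply/funext => k; by rewrite ?uz ?mul0r ?mul1r.
pose t := v 0%N / u 0%N.
pose w := fun k => 1 * v k + (- t) * u k.
have hw : l2 w by apply: l2_lc.
have w0 : w 0%N = 0 by rewrite /w /t; field.
have wB : Bform w w = 0.
  rewrite {1}/w Bform_lc // /w !Bform_lcr // huu hvv huv (Bform_sym v u) huv; ring.
have wz := Bform_iso0 hw w0 wB.
exists u, 1, t; split => //; apply/funext => k; first by rewrite mul1r.
have := wz k; rewrite /w => h; lra.
Qed.
Arguments iso_pair {u v}.

Lemma nz_index u : u <> @vzero R -> exists k, u k != 0.
Proof.
move=> hu; apply/not_existsP => hn; apply: hu; apply/funext => k.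
by have := hn k; move/negP; rewrite negbK => /eqP.
Qed.

Lemma T_vzero T : isomR T -> T (@vzero R) = (vzero R).
Proof.
case=> hl hlin _ _ _.
have := hlin 1 (vzero R) (vzero R) l2_vzero l2_vzero.
have -> : vlin 1 (@vzero R) (vzero R) = (vzero R) by apply/funext => k; rewrite /vlin /vzero mul1r addr0.
move=> h; apply/funext => k; have := congr1 (fun f => f k) h; rewrite /vlin /vzero /= mul1r => e.
lra.
Qed.
Arguments T_vzero {T}.

Lemma T_lc T (a b : R) u v : isomR T -> l2 u -> l2 v ->
  T (fun k => a * u k + b * v k) = (fun k => a * T u k + b * T v k).
Proof.
move=> hT hu hv; have T0 := T_vzero hT; case: hT => hl hlin _ _ _.
have Ts : T (fun k => b * v k) = (fun k => b * T v k).
  have := hlin b v (vzero R) hv l2_vzero.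
  have -> : vlin b v (vzero R) = (fun k => b * v k) by apply/funext => k; rewrite /vlin /vzero addr0.
  by rewrite T0 => ->; apply/funext => k; rewrite /vlin /vzero addr0.
have := hlin a u (fun k => b * v k) hu (l2_scale b hv).
rewrite /vlin => ->; by rewrite Ts.
Qed.
Arguments T_lc {T} a b {u v}.

Lemma T_scale T (a : R) u : isomR T -> l2 u -> T (fun k => a * u k) = (fun k => a * T u k).
Proof.
move=> hT hu; have := T_lc a 0 hT hu hu.
have -> : (fun k => a * u k + 0 * u k) = (fun k => a * u k) by apply/funext => k; rewrite mul0r addr0.
move=> ->; apply/funext => k; by rewrite mul0r addr0.
Qed.
Arguments T_scale {T} a {u}.

Lemma T_l2 T u : isomR T -> l2 u -> l2 (T u).
Proof. by case=> hl _ _ _ _; apply: hl. Qed.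
Arguments T_l2 {T u}.

Lemma T_B T u v : isomR T -> l2 u -> l2 v -> Bform (T u) (T v) = Bform u v.
Proof. by case=> _ _ _ _ [hB _]; apply: hB. Qed.
Arguments T_B {T u v}.
End Infra.
Arguments series_shift1 {R} u.
Arguments prod_cvg {R u v}.
Arguments l2_lc {R} a b {u v}.
Arguments Bform_sym {R} u v.
Arguments Bform_lc {R} a b {u v w}.
Arguments Bform_lcr {R} a b {u v w}.
Arguments l2_vzero {R}.
Arguments Bform_iso0 {R w}.
Arguments l2_scale {R} a {u}.
Arguments l2_lc3 {R} a b c {u v w}.
Arguments l2_lc4 {R} a b c d {u v w z}.
Arguments Bform_scale {R} a {u y}.
Arguments Bform_scaler {R} a {u y}.
Arguments Bform_lc3 {R} a b c {u v w y}.
Arguments Bform_lc4 {R} a b c d {u v w z y}.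
Arguments Bform_lcr3 {R} a b c {u v w y}.
Arguments iso_pair {R u v}.
Arguments nz_index {R u}.
Arguments T_vzero {R T}.
Arguments T_lc {R T} a b {u v}.
Arguments T_scale {R T} a {u}.
Arguments T_l2 {R T u}.
Arguments T_B {R T u v}.

Theorem mainTheorem14 (R : realType) (rho : 'M[R[i]]_2 -> vec R -> vec R)
  (eta1 eta2 : cvec R) :
  representation rho -> irreducible rho ->
  cboundary eta1 ->
  (forall lam b : R, 0 < lam -> cfixes (complexify (rho (gmat lam b))) eta1) ->
  (forall xi, cboundary xi ->
     (forall lam b : R, 0 < lam -> cfixes (complexify (rho (gmat lam b))) xi) ->
     cproj_eq eta1 xi) ->
  (forall lam : R, 0 < lam -> lam != 1 ->
     axis_endpoints (complexify (rho (gmat lam 0))) eta1 eta2) ->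
  cB eta1 eta2 = 1 ->
  forall (b : R) (mu K : R[i]) (c : cvec R),
    `|mu| = 1 ->
    csmul mu (complexify (rho (gmat 1 b)) eta1) = eta1 ->
    cl2 c -> cB c eta1 = 0 -> cB c eta2 = 0 ->
    csmul mu (complexify (rho (gmat 1 b)) eta2) = cvadd (cvadd (csmul K eta1) eta2) c ->
    complex.Im K = 0.
Proof.
case: eta1 => x1 y1; case: eta2 => x2 y2.
move=> Hrep _ Hb1 Hfix1 Huniq Haxis HB12 b mu K [c1 c2] _ HS1 [hc1 hc2] _ Hc2 HS2.
case: Hrep => Hiso _ _ _.
have isoS : isomR (rho (gmat 1 b)) by apply: Hiso; apply: U11_gmat; rewrite oner_eq0.
have isoT : isomR (rho (gmat 2 0)) by apply: Hiso; apply: U11_gmat; rewrite pnatr_eq0.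
have h2pos : (0:R) < 2 by rewrite ltr0n.
have h2ne1 : (2:R) != 1 by apply/eqP; lra.
have [_ Hb2 _ Hpres Hnofix] := Haxis 2 h2pos h2ne1.
set S := rho (gmat 1 b) in isoS HS1 HS2.
set T := rho (gmat 2 0) in isoT Hpres Hnofix.
case: Hb1 => [[hx1 hy1] hnz1 hBB1]; simpl in hx1, hy1.
case: Hb2 => [[hx2 hy2] _ hBB2]; simpl in hx2, hy2.
move: hBB1; rewrite /cB /= => /cplx_eq0 [hBB1 _].
move: hBB2; rewrite /cB /= => /cplx_eq0 [hBB2 _].
(* Step 1 : eta1 is a complex multiple of a real vector *)
pose ny1 := fun k => (-1) * y1 k + 0 * y1 k.
have hny1 : l2 ny1 := l2_lc (-1) 0 hy1 hy1.
have Hfixc : forall lam b', 0 < lam -> cfixes (complexify (rho (gmat lam b'))) (x1, ny1).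
  move=> lam b' hl; have [[nr ni] hn] := Hfix1 lam b' hl.
  have isoG : isomR (rho (gmat lam b')) by apply: Hiso; apply: U11_gmat; rewrite lt0r_neq0.
  exists (nr +i* (- ni)).
  move: hn; rewrite /complexify /csmul /= => [[e1 e2]].
  rewrite /ny1 (T_lc (-1) 0 isoG hy1 hy1) e1 e2; congr pair; apply/funext => k /=; ring.
have Hbc : cboundary (x1, ny1).
  split; first by split.
  - move=> h; apply: hnz1; case: h => ex ey; rewrite /czero ex; congr pair; apply/funext => k.
    have := congr1 (fun f => f k) ey; rewrite /ny1 /vzero /= => e; lra.
  - rewrite /cB /= /ny1 !Bform_lc // !Bform_lcr // (Bform_sym y1 x1).
    apply/eqP; rewrite eq_complex /=; apply/andP; split; apply/eqP.
    + rewrite -[X in _ = X]hBB1; ring.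
    + ring.
have [[mr mi] [hm0 hm]] := Huniq (x1, ny1) Hbc Hfixc.
move: hm; rewrite /csmul /= => [[ex ey]].
have px : forall k, x1 k = mr * x1 k - mi * y1 k by move=> k; exact: (congr1 (fun f => f k) ex).
have py : forall k, - y1 k = mr * y1 k + mi * x1 k.
  by move=> k; have := congr1 (fun f => f k) ey; rewrite /ny1 /= => <-; ring.
clear ex ey.
have [e [p [q [he hx1e hy1e hpq]]]] : exists e p q, [/\ l2 e, x1 = (fun k => p * e k),
    y1 = (fun k => q * e k) & (p != 0) || (q != 0)].
  case: (eqVneq mi 0) => hmi.
  - case: (eqVneq mr 1) => hmr.
    + exists x1, 1, 0; split => //; try (apply/funext => k).
      * by rewrite mul1r.
      * have := py k; rewrite hmi hmr => h. lra.
      * by rewrite oner_eq0.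
    + exists y1, 0, 1; split => //; try (apply/funext => k).
      * have h := px k; rewrite hmi mul0r subr0 in h; rewrite mul0r.
        apply/eqP; apply: contraR hmr => hx; apply/eqP; apply: (mulIf hx); by rewrite mul1r -h.
      * by rewrite mul1r.
      * by rewrite oner_eq0 orbT.
  - exists x1, 1, ((mr - 1) / mi); split => //; try (apply/funext => k).
    * by rewrite mul1r.
    * have h := px k.
      rewrite -[y1 k](@mulKf _ mi) //.
      have -> : mi * y1 k = (mr - 1) * x1 k by lra.
      by field.
    * by rewrite oner_eq0.
subst x1 y1.
have [k0 hk0] : exists k0, e k0 != 0.
  apply: nz_index => he0; apply: hnz1; rewrite he0 /czero; congr pair; apply/funext => k; by rewrite /vzero mulr0.
have hpq2 : 0 < p ^+ 2 + q ^+ 2.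
  rewrite lt_def paddr_eq0 ?sqr_ge0 // !sqrf_eq0 negb_and hpq /=.
  by rewrite addr_ge0 // sqr_ge0.
have hee : Bform e e = 0.
  move: hBB1; rewrite !Bform_scale // !Bform_scaler // => h.
  have : (p ^+ 2 + q ^+ 2) * Bform e e = 0 by rewrite -h; ring.
  by move/eqP; rewrite mulf_eq0 (gt_eqF hpq2) /= => /eqP.
have HB12' := HB12.
move: HB12; rewrite /cB /= !Bform_scale // => /cplx_eq1 [hpA hqA].
set A := Bform e x2 in hpA hqA.
set C := Bform e y2 in hpA hqA.
have [lam hlam] : exists lam, T e = (fun k => lam * e k).
  have [[nr ni] hn] := Hfix1 2 0 h2pos.
  move: hn; rewrite /complexify /csmul /= => [[e1 e2]].
  rewrite -/T !(T_scale _ isoT he) in e1 e2.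
  case/orP: hpq => hp.
  - exists ((nr * p - ni * q) / p); apply/funext => k.
    have := congr1 (fun f => f k) e1 => /= h.
    apply: (mulfI hp); rewrite h; by field.
  - exists ((nr * q + ni * p) / q); apply/funext => k.
    have := congr1 (fun f => f k) e2 => /= h.
    apply: (mulfI hp); rewrite h; by field.
have h1geo : on_geod_param (fun k => p * e k, fun k => q * e k) (x2, y2) 1.
  by rewrite /on_geod_param HB12' mulr1 ltr01.
have [[tr ti] [htpos [[mr' mi'] [hm0' hTg]]]] := Hpres 1 h1geo.
move: htpos; rewrite /on_geod_param HB12' mulr1 ltcE /= => /andP [/eqP hti _]; subst ti.
move: hTg; rewrite /geod_pt /cvadd /csmul /complexify /=.
have g1 : (fun k => 1 * (p * e k) - 0 * (q * e k) + x2 k) = (fun k => p * e k + 1 * x2 k).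
  by apply/funext => k; ring.
have g2 : (fun k => 1 * (q * e k) + 0 * (p * e k) + y2 k) = (fun k => q * e k + 1 * y2 k).
  by apply/funext => k; ring.
rewrite g1 g2 (T_lc p 1 isoT he hx2) (T_lc q 1 isoT he hy2) hlam => [[E1 E2]].
set g1c := mr' * tr * p - mi' * tr * q - p * lam.
set g2c := mr' * tr * q + mi' * tr * p - q * lam.
have hTx2 : T x2 = (fun k => mr' * x2 k + (- mi') * y2 k + g1c * e k).
  apply/funext => k; have := congr1 (fun f => f k) E1 => /= h.
  rewrite /g1c; lra.
have hTy2 : T y2 = (fun k => mr' * y2 k + mi' * x2 k + g2c * e k).
  apply/funext => k; have := congr1 (fun f => f k) E2 => /= h.
  rewrite /g2c; lra.
have hl3x : l2 (fun k => mr' * x2 k + (- mi') * y2 k + g1c * e k) by apply: l2_lc3.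
have hl3y : l2 (fun k => mr' * y2 k + mi' * x2 k + g2c * e k) by apply: l2_lc3.
have hAe := T_B isoT he hx2.
rewrite hlam hTx2 Bform_scale // Bform_lcr3 // hee -/A -/C in hAe.
have hCe := T_B isoT he hy2.
rewrite hlam hTy2 Bform_scale // Bform_lcr3 // hee -/A -/C in hCe.
have hAC : A ^+ 2 + C ^+ 2 != 0.
  apply/negP => h0; move: h0; rewrite paddr_eq0 ?sqr_ge0 // !sqrf_eq0 => /andP [/eqP hA0 /eqP hC0].
  move: hpA; rewrite hA0 hC0 !mulr0 addr0 => /eqP; by rewrite eq_sym oner_eq0.
have hX : (lam * mr' - 1) * (A ^+ 2 + C ^+ 2) = 0.
  have -> : (lam * mr' - 1) * (A ^+ 2 + C ^+ 2) =
     A * (lam * (mr' * A + - mi' * C + g1c * 0) - A) + C * (lam * (mr' * C + mi' * A + g2c * 0) - C) by ring.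
  by rewrite hAe hCe !subrr !mulr0 addr0.
have hY : (lam * mi') * (A ^+ 2 + C ^+ 2) = 0.
  have -> : (lam * mi') * (A ^+ 2 + C ^+ 2) =
     A * (lam * (mr' * C + mi' * A + g2c * 0)) - C * (lam * (mr' * A + - mi' * C + g1c * 0)) by ring.
  by rewrite hAe hCe; ring.
move/eqP: hX; rewrite mulf_eq0 (negbTE hAC) orbF subr_eq0 => /eqP hlm.
have hlam0 : lam != 0 by apply/eqP => h0; move: hlm; rewrite h0 mul0r => /eqP; rewrite eq_sym oner_eq0.
have hmr0 : mr' != 0 by apply/eqP => h0; move: hlm; rewrite h0 mulr0 => /eqP; rewrite eq_sym oner_eq0.
move/eqP: hY; rewrite mulf_eq0 (negbTE hAC) orbF mulf_eq0 (negbTE hlam0) /= => /eqP hmi'.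
subst mi'.
have hU : Bform (T x2) (T x2) + Bform (T y2) (T y2) = 0 by rewrite !T_B.
rewrite {1 2}hTx2 {1 2}hTy2 Bform_lc3 // Bform_lc3 // !Bform_lcr3 // in hU.
rewrite (Bform_sym x2 e) (Bform_sym y2 e) -/A -/C hee in hU.
have hk : 2 * mr' * (mr' * tr - lam) * (p * A + q * C) + mr' ^+ 2 * (Bform x2 x2 + Bform y2 y2) = 0.
  rewrite -[X in _ = X]hU /g1c /g2c; ring.
rewrite hpA hBB2 mulr1 mulr0 addr0 in hk.
have hk' : mr' * tr - lam = 0.
  by move/eqP: hk; rewrite !mulf_eq0 pnatr_eq0 (negbTE hmr0) /= => /eqP.
have hTx2' : T x2 = (fun k => mr' * x2 k).
  rewrite hTx2; apply/funext => k; rewrite /g1c.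
  have -> : lam = mr' * tr by lra.
  ring.
have hTy2' : T y2 = (fun k => mr' * y2 k).
  rewrite hTy2; apply/funext => k; rewrite /g2c.
  have -> : lam = mr' * tr by lra.
  ring.
have hmr2 : mr' ^+ 2 != 1.
  apply/negP => /eqP h.
  have hlm' : lam = mr'.
    have -> : lam = lam * mr' ^+ 2 by rewrite h mulr1.
    by rewrite expr2 mulrA hlm mul1r.
  apply: (Hnofix 1 h1geo); exists (mr' +i* 0); split.
    by apply/negP; rewrite eq_complex /= (negbTE hmr0).
  rewrite /geod_pt /cvadd /csmul /complexify /= g1 g2 (T_lc p 1 isoT he hx2) (T_lc q 1 isoT he hy2).
  rewrite hlam hTx2' hTy2' hlm'; congr pair; apply/funext => k /=; ring.
have hsx := l2_scale mr' hx2.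
have hsy := l2_scale mr' hy2.
have zero_of : forall z : R, mr' * (mr' * z) = z -> z = 0.
  move=> z hz.
  have : (mr' ^+ 2 - 1) * z = mr' * (mr' * z) - z by ring.
  by rewrite hz subrr => /eqP; rewrite mulf_eq0 subr_eq0 (negbTE hmr2) /= => /eqP.
have hxx : Bform x2 x2 = 0.
  apply: zero_of; have h := T_B isoT hx2 hx2.
  by rewrite hTx2' Bform_scale // Bform_scaler // in h.
have hyy : Bform y2 y2 = 0.
  apply: zero_of; have h := T_B isoT hy2 hy2.
  by rewrite hTy2' Bform_scale // Bform_scaler // in h.
have hxy : Bform x2 y2 = 0.
  apply: zero_of; have h := T_B isoT hx2 hy2.
  by rewrite hTx2' hTy2' Bform_scale // Bform_scaler // in h.
have [f [al [be [hf hx2f hy2f]]]] := iso_pair hx2 hy2 hxx hyy hxy.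
case: mu HS1 HS2 => ur ui HS1 HS2.
move: HS1; rewrite /csmul /complexify /= !(T_scale _ isoS he) => [[s1 s2]].
have h1 := congr1 (fun f => f k0) s1; have h2 := congr1 (fun f => f k0) s2; simpl in h1, h2.
have hSe : S e k0 != 0.
  apply/negP => /eqP h0; move: h1 h2; rewrite h0 !mulr0 subr0 addr0.
  move=> /esym/eqP; rewrite mulf_eq0 (negbTE hk0) orbF => hp0.
  move=> /esym/eqP; rewrite mulf_eq0 (negbTE hk0) orbF => hq0.
  by rewrite hp0 hq0 in hpq.
have hui : ui = 0.
  have : ui * (p ^+ 2 + q ^+ 2) * S e k0 =
     p * (ur * (q * S e k0) + ui * (p * S e k0)) - q * (ur * (p * S e k0) - ui * (q * S e k0)) by ring.
  rewrite h1 h2.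
  have -> : p * (q * e k0) - q * (p * e k0) = 0 by ring.
  move/eqP; rewrite !mulf_eq0 (negbTE hSe) (gt_eqF hpq2) !orbF => /eqP //.
subst ui.
move: Hc2; rewrite /cB /= => /cplx_eq0 [_ hcim].
case: K HS2 => kr ki HS2 /=.
subst x2 y2.
move: HS2; rewrite /csmul /cvadd /complexify /= !(T_scale _ isoS hf) => [[t1 t2]].
have hSf := T_l2 isoS hf.
have u1 : (fun k => (ur * al) * S f k) = (fun k => (kr * p - ki * q) * e k + al * f k + 1 * c1 k).
  apply/funext => k; have := congr1 (fun g => g k) t1 => /= h.
  have -> : ur * al * S f k = ur * (al * S f k) - 0 * (be * S f k) by ring.
  rewrite h; ring.
have u2 : (fun k => (ur * be) * S f k) = (fun k => (kr * q + ki * p) * e k + be * f k + 1 * c2 k).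
  apply/funext => k; have := congr1 (fun g => g k) t2 => /= h.
  have -> : ur * be * S f k = ur * (be * S f k) + 0 * (al * S f k) by ring.
  rewrite h; ring.
have b1 := congr1 (fun g => Bform g f) u1; have b2 := congr1 (fun g => Bform g f) u2.
simpl in b1, b2.
rewrite Bform_scale // Bform_lc3 // in b1.
rewrite Bform_scale // Bform_lc3 // in b2.
have hA' : A = al * Bform e f by rewrite /A Bform_scaler.
have hC' : C = be * Bform e f by rewrite /C Bform_scaler.
rewrite !Bform_scaler // in hcim.
have key : kr * (q * A - p * C) + ki * (p * A + q * C) + (al * Bform c2 f - be * Bform c1 f) =
  be * (ur * al * Bform (S f) f - ((kr * p - ki * q) * Bform e f + al * Bform f f + 1 * Bform c1 f))
  - al * (ur * be * Bform (S f) f - ((kr * q + ki * p) * Bform e f + be * Bform f f + 1 * Bform c2 f)).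
  rewrite hA' hC'; ring.
rewrite b1 b2 !subrr !mulr0 subrr hqA hpA hcim in key.
by move: key; rewrite mulr0 mulr1 add0r addr0.
Qed.
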